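(* Let $G=(V,E)$ be the king grid and let $S\subset V$ be a locating-paired-dominating set of $G$. Fix any perfect matching $M$ of the induced subgraph $G[S]$, and for $v\in S$ let $m(v)$ denote the partner of $v$ in $M$. Define $S_1=\{v\in S : |N(v)\cap N(m(v))|=2\}$ and $S_2=\{v\in S : |N(v)\cap N(m(v))|=4\}$. Then $$\frac{14}{3}D(S_1)+\frac{9}{2}D(S_2)\ge 1.$$
   Context: The king grid is the infinite graph with vertex set $\mathbb{Z}\times\mathbb{Z}$ in which two distinct vertices are adjacent iff their Euclidean distance is at most $\sqrt2$. $N(v)$ is the open neighborhood of $v$ and $N[v]=N(v)\cup\{v\}$. A set $S\subset V$ is a locating-paired-dominating set (LPDS) if (i) every vertex $v\in V$ satisfies $N[v]\cap S\neq\emptyset$, (ii) the induced subgraph $G[S]$ has a perfect matching, and (iii) for any two distinct vertices $u,v\in V\setminus S$, $N(u)\cap S\neq N(v)\cap S$. For $k\ge 0$ and $u\in V$, $N^k[u]=\{x\in V: d(u,x)\le k\}$, where $d$ is graph distance. The density of a set $A\subset V$ is $D(A)=\limsup_{k\to\infty}\frac{|A\cap N^k[u]|}{|N^k[u]|}$ (independent of the choice of $u$). Note $S_1$ consists of vertices whose partner is at Euclidean distance $\sqrt2$ and $S_2$ of those whose partner is at distance $1$; $S=S_1\cup S_2$ disjointly. *)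

(* Defs.v *)
From Stdlib Require Import Reals ZArith List Classical ClassicalEpsilon.
From Coquelicot Require Import Coquelicot.
Open Scope R_scope.

Definition V := (Z * Z)%type.

Definition adj (a b : V) : Prop :=
  a <> b /\ ((fst a - fst b) * (fst a - fst b) + (snd a - snd b) * (snd a - snd b) <= 2)%Z.

Fixpoint dist_le (k : nat) (u x : V) : Prop :=
  match k with
  | O => u = x
  | S k' => dist_le k' u x \/ exists y, dist_le k' u y /\ adj y x
  end.

Definition ind (P : Prop) : nat :=
  if excluded_middle_informative P then 1%nat else 0%nat.

Definition count_box (c : V) (r : nat) (P : V -> Prop) : nat :=
  fold_right Nat.add 0%nat
    (map (fun i =>
       fold_right Nat.add 0%nat
         (map (fun j =>
            ind (P (fst c - Z.of_nat r + Z.of_nat i, snd c - Z.of_nat r + Z.of_nat j)%Z))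
            (seq 0 (2 * r + 1))))
       (seq 0 (2 * r + 1))).

(* |A ∩ N^k[u]|: every vertex at graph distance <= k from u lies in the
   box of radius k around u (each edge changes each coordinate by <= 1),
   so counting over that box counts the whole set. *)
Definition card_in_ball (A : V -> Prop) (u : V) (k : nat) : nat :=
  count_box u k (fun x => A x /\ dist_le k u x).

(* Density D(A) = limsup_k |A ∩ N^k[u]| / |N^k[u]|, with u the origin
   (the value is independent of u). The ratio lies in [0,1], so the
   limsup is finite and [real] extracts it. *)
Definition density (A : V -> Prop) : R :=
  real (LimSup_seq (fun k =>
    INR (card_in_ball A (0%Z, 0%Z) k) / INR (card_in_ball (fun _ => True) (0%Z, 0%Z) k))).

(* N(v) ∩ N(w) has size n: neighbours of v lie in the radius-1 box around v. *)
Definition common_nbrs (v w : V) : nat :=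
  count_box v 1 (fun x => adj v x /\ adj w x).

Definition has_perfect_matching (S : V -> Prop) (M : V -> V -> Prop) : Prop :=
  (forall u v, M u v -> M v u) /\
  (forall u v, M u v -> S u /\ S v /\ adj u v) /\
  (forall v, S v -> exists w, M v w /\ forall w', M v w' -> w' = w).

Definition LPDS (S : V -> Prop) : Prop :=
  (forall v, S v \/ exists x, adj v x /\ S x) /\
  (exists M, has_perfect_matching S M) /\
  (forall u v, u <> v -> ~ S u -> ~ S v ->
     ~ (forall x, (adj u x /\ S x) <-> (adj v x /\ S x))).

Definition S_of (S : V -> Prop) (M : V -> V -> Prop) (n : nat) (v : V) : Prop :=
  S v /\ exists w, M v w /\ common_nbrs v w = n.

(* Main.v *)
From Stdlib Require Import Reals ZArith List Lia Lra Bool Classical ClassicalEpsilon.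
Require Import Defs.
Import ListNotations.

Definition vadd (p e : V) : V := (fst p + fst e, snd p + snd e)%Z.
Definition peqb (p q : V) : bool := Z.eqb (fst p) (fst q) && Z.eqb (snd p) (snd q).
Definition adjb (p q : V) : bool :=
  negb (peqb p q) && Z.leb ((fst p - fst q)*(fst p - fst q) + (snd p - snd q)*(snd p - snd q)) 2.
Definition D8 : list V := [(-1,-1);(-1,0);(-1,1);(0,-1);(0,1);(1,-1);(1,0);(1,1)]%Z.
Definition D9 : list V := [(-1,-1);(-1,0);(-1,1);(0,-1);(0,0);(0,1);(1,-1);(1,0);(1,1)]%Z.

Lemma peqb_true (p q : V) : peqb p q = true <-> p = q.
Proof.
  destruct p as [a b], q as [c e]; unfold peqb; simpl.
  rewrite andb_true_iff, !Z.eqb_eq. split; [intros [-> ->]; auto | intros H; inversion H; auto].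
Qed.

Lemma peqb_refl p : peqb p p = true.
Proof. apply peqb_true; auto. Qed.

Lemma peqb_false (p q : V) : peqb p q = false <-> p <> q.
Proof.
  split; intros H.
  - intros E; apply peqb_true in E; congruence.
  - destruct (peqb p q) eqn:E; auto. apply peqb_true in E; congruence.
Qed.

Lemma adjb_adj p q : adjb p q = true <-> adj p q.
Proof.
  unfold adjb, adj. rewrite andb_true_iff, negb_true_iff, peqb_false, Z.leb_le. tauto.
Qed.

Lemma sq_sym (x y : Z) : ((x - y) * (x - y) = (y - x) * (y - x))%Z.
Proof. ring. Qed.

Lemma adj_sym p q : adj p q -> adj q p.
Proof.
  unfold adj. intros [H1 H2]. split; [auto|]. rewrite (sq_sym (fst q)), (sq_sym (snd q)); auto.
Qed.

Lemma adjb_sym p q : adjb p q = adjb q p.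
Proof.
  destruct (adjb p q) eqn:E1, (adjb q p) eqn:E2; auto.
  - apply adjb_adj, adj_sym, adjb_adj in E1; congruence.
  - apply adjb_adj, adj_sym, adjb_adj in E2; congruence.
Qed.

Definition nbrs (p : V) := map (vadd p) D8.
Definition nbhd (p : V) := map (vadd p) D9.

Lemma adj_nbr p q : adjb p q = true -> In q (nbrs p).
Proof.
  intros H. apply adjb_adj in H. destruct H as [Hne Hle].
  destruct p as [p1 p2], q as [q1 q2]; simpl in *.
  assert (Ha: (0 <= (p1 - q1) * (p1 - q1))%Z) by apply Z.square_nonneg.
  assert (Hb: (0 <= (p2 - q2) * (p2 - q2))%Z) by apply Z.square_nonneg.
  assert (A: (q1 - p1 = -1 \/ q1 - p1 = 0 \/ q1 - p1 = 1)%Z).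
  { assert (Hx: ((p1 - q1) * (p1 - q1) <= 2)%Z) by lia.
    destruct (Z_le_gt_dec 2 (p1 - q1)); [nia|]. destruct (Z_le_gt_dec (p1 - q1) (-2)); [nia|]. lia. }
  assert (B: (q2 - p2 = -1 \/ q2 - p2 = 0 \/ q2 - p2 = 1)%Z).
  { assert (Hx: ((p2 - q2) * (p2 - q2) <= 2)%Z) by lia.
    destruct (Z_le_gt_dec 2 (p2 - q2)); [nia|]. destruct (Z_le_gt_dec (p2 - q2) (-2)); [nia|]. lia. }
  unfold nbrs, D8, vadd; simpl.
  destruct A as [A|[A|A]]; destruct B as [B|[B|B]];
  try (exfalso; apply Hne; f_equal; lia);
  repeat first [ left; f_equal; lia | right ].
Qed.

Lemma nbrs_nbhd p q : In q (nbrs p) -> In q (nbhd p).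
Proof. unfold nbrs, nbhd, D8, D9; simpl; tauto. Qed.

Lemma self_nbhd p : In p (nbhd p).
Proof.
  unfold nbhd, D9, vadd; simpl. do 4 right. left. destruct p; simpl; f_equal; lia.
Qed.

Lemma adj_nbhd p q : adjb p q = true -> In q (nbhd p).
Proof. intros; apply nbrs_nbhd, adj_nbr; auto. Qed.

Lemma vadd_inj p : forall a b, vadd p a = vadd p b -> a = b.
Proof.
  intros [a1 a2] [b1 b2]; unfold vadd; simpl; intros H; inversion H; f_equal; lia.
Qed.

Lemma D9_nodup : NoDup D9.
Proof.
  unfold D9. repeat constructor; simpl; intuition discriminate.
Qed.

Lemma nbhd_nodup p : NoDup (nbhd p).
Proof.
  unfold nbhd. apply NoDup_map_NoDup_ForallPairs; [|apply D9_nodup].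
  intros a b _ _; apply vadd_inj.
Qed.

Fixpoint upd {A} (i : nat) (f : A -> A) (l : list A) : list A :=
  match l, i with
  | [], _ => []
  | x :: t, O => f x :: t
  | x :: t, S i' => x :: upd i' f t
  end.

Lemma nth_upd_neq {A} (i k : nat) (f : A -> A) l dflt :
  k <> i -> nth k (upd i f l) dflt = nth k l dflt.
Proof.
  revert i k; induction l as [|x t IH]; intros i k H; destruct i, k; simpl; auto; try lia.
Qed.

Lemma nth_upd_eq {A} (i : nat) (f : A -> A) l dflt :
  nth i (upd i f l) dflt = nth i l dflt \/ nth i (upd i f l) dflt = f (nth i l dflt).
Proof.
  revert i; induction l as [|x t IH]; intros i; destruct i; simpl; auto.
Qed.

Definition inr (p : V) : bool := Z.leb 0 (fst p + 3) && Z.leb 0 (snd p + 3).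
Definition grid := list (list (option bool)).
Definition get (gr : grid) (p : V) : option bool :=
  if inr p then nth (Z.to_nat (snd p + 3)) (nth (Z.to_nat (fst p + 3)) gr []) None else None.
Definition setg (gr : grid) (p : V) (b : bool) : grid :=
  if inr p then upd (Z.to_nat (fst p + 3)) (fun row => upd (Z.to_nat (snd p + 3)) (fun _ => Some b) row) gr else gr.
Definition grid0 : grid := repeat (repeat None 7) 7.

Lemma get_setg gr c b p b' :
  get (setg gr c b) p = Some b' -> (p = c /\ b' = b) \/ get gr p = Some b'.
Proof.
  unfold setg. destruct (inr c) eqn:Hc; [|auto].
  unfold get. destruct (inr p) eqn:Hp; [|discriminate].
  unfold inr in Hc, Hp. rewrite andb_true_iff, !Z.leb_le in Hc, Hp.
  intros H.
  destruct (Nat.eq_dec (Z.to_nat (fst p + 3)) (Z.to_nat (fst c + 3))) as [E1|E1].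
  - rewrite E1 in H |- *.
    destruct (nth_upd_eq (Z.to_nat (fst c + 3))
       (fun row => upd (Z.to_nat (snd c + 3)) (fun _ => Some b) row) gr []) as [E|E];
      rewrite E in H; [auto|].
    destruct (Nat.eq_dec (Z.to_nat (snd p + 3)) (Z.to_nat (snd c + 3))) as [E2|E2].
    + rewrite E2 in H |- *.
      destruct (nth_upd_eq (Z.to_nat (snd c + 3)) (fun _ : option bool => Some b)
                 (nth (Z.to_nat (fst c + 3)) gr []) None) as [E'|E']; rewrite E' in H.
      * right. auto.
      * left. inversion H. split; auto.
        apply Z2Nat.inj in E1; try lia. apply Z2Nat.inj in E2; try lia.
        destruct p, c; simpl in *; f_equal; lia.
    + rewrite nth_upd_neq in H by auto. auto.
  - rewrite nth_upd_neq in H by auto. auto.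
Qed.

Definition agree (g : V -> bool) (gr : grid) := forall p b, get gr p = Some b -> g p = b.

Lemma agree_set g gr c : agree g gr -> agree g (setg gr c (g c)).
Proof.
  intros H p b E. apply get_setg in E. destruct E as [[-> ->]|E]; auto.
Qed.

Lemma nth_repeat_none k n : nth k (repeat (@None bool) n) None = None.
Proof. revert k; induction n; intros [|k]; simpl; auto. Qed.

Lemma nth_repeat_or (r : list (option bool)) n k : nth k (repeat r n) [] = r \/ nth k (repeat r n) [] = [].
Proof. revert k; induction n; intros [|k]; simpl; auto. Qed.

Lemma agree_grid0 g : agree g grid0.
Proof.
  intros p b. unfold get, grid0. destruct (inr p); [|discriminate].
  assert (H: forall k, nth k (repeat (repeat (@None bool) 7) 7) [] = repeat None 7 \/
                       nth k (repeat (repeat (@None bool) 7) 7) [] = []).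
  { intros k. apply nth_repeat_or. }
  destruct (H (Z.to_nat (fst p + 3))) as [E|E]; rewrite E.
  - rewrite nth_repeat_none; discriminate.
  - destruct (Z.to_nat (snd p + 3)); discriminate.
Qed.

Definition Vdec (p q : V) : {p = q} + {p <> q}.
Proof. decide equality; apply Z.eq_dec. Qed.

Definition bit (b : bool) : nat := if b then 1%nat else 0%nat.
Definition cntl (g : V -> bool) (l : list V) : nat := fold_right (fun p n => (bit (g p) + n)%nat) 0%nat l.

Lemma count_ge g l : forall K, NoDup l -> NoDup K -> incl K l -> (forall p, In p K -> g p = true) ->
  (length K <= cntl g l)%nat.
Proof.
  induction l as [|a l IH]; intros K Hl HK Hinc HT.
  - destruct K as [|k K]; simpl; auto. exfalso; apply (Hinc k); simpl; auto.
  - inversion Hl as [|? ? Ha Hl']; subst. simpl.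
    destruct (in_dec Vdec a K) as [Ia|Ia].
    + apply in_split in Ia. destruct Ia as [K1 [K2 ->]].
      assert (HK' : NoDup (K1 ++ K2)) by (eapply NoDup_remove_1; eauto).
      assert (Hn : ~ In a (K1 ++ K2)) by (eapply NoDup_remove_2; eauto).
      assert (Hi : incl (K1 ++ K2) l).
      { intros y Hy. assert (In y (a :: l)).
        { apply Hinc. apply in_app_or in Hy. apply in_or_app. simpl. tauto. }
        destruct H; [subst; contradiction|auto]. }
      assert (Hg : g a = true) by (apply HT; apply in_or_app; simpl; auto).
      specialize (IH (K1 ++ K2) Hl' HK' Hi).
      assert (length (K1 ++ K2) <= cntl g l)%nat.
      { apply IH. intros p Hp. apply HT. apply in_app_or in Hp. apply in_or_app. simpl. tauto. }
      rewrite length_app in *. simpl. rewrite Hg. simpl. lia.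
    + assert (length K <= cntl g l)%nat.
      { apply IH; auto. intros y Hy. destruct (Hinc y Hy); [subst; contradiction|auto]. }
      destruct (g a); simpl; lia.
Qed.

Lemma cntl_le9 g x : (cntl g (nbhd x) <= 9)%nat.
Proof. unfold nbhd, D9; simpl. repeat (destruct (g _)); simpl; lia. Qed.

Definition cntg (g : V -> bool) (x : V) : nat := cntl g (nbhd x).

Lemma cnt_ge1 g x s : In s (nbhd x) -> g s = true -> (1 <= cntg g x)%nat.
Proof.
  intros H1 H2. apply (count_ge g (nbhd x) [s]); auto using nbhd_nodup.
  - constructor; auto; constructor.
  - intros y [<-|[]]; auto.
  - intros y [<-|[]]; auto.
Qed.

Lemma cnt_ge2 g x s m : In s (nbhd x) -> In m (nbhd x) -> s <> m -> g s = true -> g m = true ->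
  (2 <= cntg g x)%nat.
Proof.
  intros H1 H2 H3 H4 H5. apply (count_ge g (nbhd x) [s; m]); auto using nbhd_nodup.
  - constructor; [simpl; intuition|constructor; auto; constructor].
  - intros y [<-|[<-|[]]]; auto.
  - intros y [<-|[<-|[]]]; auto.
Qed.

Lemma cnt1_only g x s : cntg g x = 1%nat -> In s (nbhd x) -> g s = true ->
  forall z, In z (nbhd x) -> g z = true -> z = s.
Proof.
  intros Hc H1 H2 z Hz Hg. destruct (Vdec z s) as [|n]; auto. exfalso.
  assert (2 <= cntg g x)%nat by (apply (cnt_ge2 g x s z); auto).
  lia.
Qed.

Lemma cnt2_only g x s m : cntg g x = 2%nat -> In s (nbhd x) -> In m (nbhd x) -> s <> m ->
  g s = true -> g m = true ->
  forall z, In z (nbhd x) -> g z = true -> z = s \/ z = m.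
Proof.
  intros Hc H1 H2 H3 H4 H5 z Hz Hg.
  destruct (Vdec z s) as [|n1]; auto. destruct (Vdec z m) as [|n2]; auto. exfalso.
  assert (3 <= cntg g x)%nat.
  { apply (count_ge g (nbhd x) [s; m; z]); auto using nbhd_nodup.
    - constructor; [simpl; intuition|]. constructor; [simpl; intuition|]. constructor; auto; constructor.
    - intros y [<-|[<-|[<-|[]]]]; auto.
    - intros y [<-|[<-|[<-|[]]]]; auto. }
  lia.
Qed.

Definition Hloc_g (g : V -> bool) := forall a b, a <> b -> g a = false -> g b = false ->
  (forall z, (adjb a z && g z) = (adjb b z && g z)) -> False.
Definition Hpart_g (g : V -> bool) (s m : V) := forall x, g x = true -> x <> s -> x <> m ->
  exists z, adjb x z = true /\ g z = true /\ z <> s /\ z <> m.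

Lemma single_nb g x s : cntg g x = 1%nat -> adjb x s = true -> g s = true ->
  g x = false /\ forall z, (adjb x z && g z) = peqb z s.
Proof.
  intros Hc Ha Hs.
  assert (Hin : In s (nbhd x)) by (apply adj_nbhd; auto).
  split.
  - destruct (g x) eqn:E; auto. exfalso.
    assert (x = s) by (apply (cnt1_only g x s); auto using self_nbhd).
    subst. apply adjb_adj in Ha. destruct Ha; auto.
  - intros z. destruct (adjb x z) eqn:A, (g z) eqn:G; simpl.
    + symmetry; apply peqb_true. apply (cnt1_only g x s); auto. apply adj_nbhd; auto.
    + symmetry; apply peqb_false. intros ->; congruence.
    + symmetry; apply peqb_false. intros ->; congruence.
    + symmetry; apply peqb_false. intros ->; congruence.
Qed.

Lemma double_nb g x s m : cntg g x = 2%nat -> adjb x s = true -> adjb x m = true -> s <> m ->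
  g s = true -> g m = true ->
  g x = false /\ forall z, (adjb x z && g z) = (peqb z s || peqb z m).
Proof.
  intros Hc Ha Hb Hne Hs Hm.
  assert (Hin : In s (nbhd x)) by (apply adj_nbhd; auto).
  assert (Hin2 : In m (nbhd x)) by (apply adj_nbhd; auto).
  split.
  - destruct (g x) eqn:E; auto. exfalso.
    destruct (cnt2_only g x s m Hc Hin Hin2 Hne Hs Hm x (self_nbhd x) E); subst.
    + apply adjb_adj in Ha. destruct Ha; auto.
    + apply adjb_adj in Hb. destruct Hb; auto.
  - intros z. destruct (adjb x z) eqn:A, (g z) eqn:G; simpl.
    + destruct (cnt2_only g x s m Hc Hin Hin2 Hne Hs Hm z) as [->| ->]; auto using adj_nbhd.
      * rewrite peqb_refl; auto.
      * rewrite peqb_refl, orb_true_r; auto.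
    + destruct (peqb z s) eqn:E1; [apply peqb_true in E1; subst; congruence|].
      destruct (peqb z m) eqn:E2; [apply peqb_true in E2; subst; congruence|]. auto.
    + destruct (peqb z s) eqn:E1; [apply peqb_true in E1; subst; congruence|].
      destruct (peqb z m) eqn:E2; [apply peqb_true in E2; subst; congruence|]. auto.
    + destruct (peqb z s) eqn:E1; [apply peqb_true in E1; subst; congruence|].
      destruct (peqb z m) eqn:E2; [apply peqb_true in E2; subst; congruence|]. auto.
Qed.

Lemma uniq1 g s x y : Hloc_g g -> g s = true ->
  adjb x s = true -> adjb y s = true -> cntg g x = 1%nat -> cntg g y = 1%nat -> x = y.
Proof.
  intros HL Hs Hx Hy Cx Cy. destruct (Vdec x y) as [|n]; auto. exfalso.
  destruct (single_nb g x s Cx Hx Hs) as [gx Ex].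
  destruct (single_nb g y s Cy Hy Hs) as [gy Ey].
  apply (HL x y n gx gy). intros z. rewrite Ex, Ey; auto.
Qed.

Lemma uniq2 g s m x y : Hloc_g g -> g s = true -> g m = true -> s <> m ->
  adjb x s = true -> adjb x m = true -> adjb y s = true -> adjb y m = true ->
  cntg g x = 2%nat -> cntg g y = 2%nat -> x = y.
Proof.
  intros HL Hs Hm Hne Hx1 Hx2 Hy1 Hy2 Cx Cy. destruct (Vdec x y) as [|n]; auto. exfalso.
  destruct (double_nb g x s m Cx Hx1 Hx2 Hne Hs Hm) as [gx Ex].
  destruct (double_nb g y s m Cy Hy1 Hy2 Hne Hs Hm) as [gy Ey].
  apply (HL x y n gx gy). intros z. rewrite Ex, Ey; auto.
Qed.

Definition term (c : nat) : Z :=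
  match c with 1%nat => 2520%Z | 2%nat => 1260%Z | 3%nat => 840%Z | 4%nat => 630%Z | 5%nat => 504%Z
  | 6%nat => 420%Z | 7%nat => 360%Z | 8%nat => 315%Z | 9%nat => 280%Z | _ => 0%Z end.

Lemma term_nonneg c : (0 <= term c)%Z.
Proof. unfold term. repeat (destruct c as [|c]; try lia). Qed.

Lemma term_anti a b : (1 <= a)%nat -> (a <= b)%nat -> (term b <= term a)%Z.
Proof.
  intros H1 H2.
  destruct (Nat.le_gt_cases 10 b).
  - replace (term b) with 0%Z. 2:{ unfold term. do 10 (destruct b as [|b]; try lia). }
    apply term_nonneg.
  - assert (a <= 9)%nat by lia. assert (b <= 9)%nat by lia.
    assert (Ha : a = 1%nat \/ a = 2%nat \/ a = 3%nat \/ a = 4%nat \/ a = 5%nat \/ a = 6%nat \/ a = 7%nat \/ a = 8%nat \/ a = 9%nat) by lia.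
    assert (Hb : b = 1%nat \/ b = 2%nat \/ b = 3%nat \/ b = 4%nat \/ b = 5%nat \/ b = 6%nat \/ b = 7%nat \/ b = 8%nat \/ b = 9%nat) by lia.
    destruct Ha as [->|[->|[->|[->|[->|[->|[->|[->| ->]]]]]]]];
    destruct Hb as [->|[->|[->|[->|[->|[->|[->|[->| ->]]]]]]]]; unfold term; lia.
Qed.

Definition sumZ (L : list V) (f : V -> Z) : Z := fold_right (fun x acc => (f x + acc)%Z) 0%Z L.

Lemma GA (c l : V -> nat) k L : (1 <= k)%nat -> (forall x, In x L -> (l x <= c x)%nat) ->
  (forall x, In x L -> (k <= c x)%nat) ->
  (sumZ L (fun x => term (c x)) <= sumZ L (fun x => term (Nat.max (l x) k)))%Z.
Proof.
  intros Hk H1 H2. induction L as [|a L IH]; simpl; [lia|].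
  assert (term (c a) <= term (Nat.max (l a) k))%Z.
  { apply term_anti; [lia|]. specialize (H1 a (or_introl eq_refl)). specialize (H2 a (or_introl eq_refl)). lia. }
  assert (sumZ L (fun x => term (c x)) <= sumZ L (fun x => term (Nat.max (l x) k)))%Z.
  { apply IH; intros; [apply H1|apply H2]; simpl; auto. }
  lia.
Qed.

Lemma GL (c l : V -> nat) k L : (2 <= k)%nat -> NoDup L ->
  (forall x, In x L -> (l x <= c x)%nat) ->
  (forall x, In x L -> (k - 1 <= c x)%nat) ->
  (forall x y, In x L -> In y L -> c x = (k - 1)%nat -> c y = (k - 1)%nat -> x = y) ->
  (sumZ L (fun x => term (c x)) <= sumZ L (fun x => term (Nat.max (l x) k)) +
     (if existsb (fun x => Nat.ltb (l x) k) L then 1 else 0) * (term (k - 1) - term k))%Z.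
Proof.
  intros Hk HN H1 H2 H3. induction L as [|a L IH]; simpl; [lia|].
  inversion HN as [|? ? Ha HN']; subst.
  assert (Hd : (term k <= term (k - 1))%Z) by (apply term_anti; lia).
  destruct (Nat.eq_dec (c a) (k - 1)) as [E|E].
  - assert (Hrest : forall y, In y L -> (k <= c y)%nat).
    { intros y Hy. specialize (H2 y (or_intror Hy)).
      destruct (Nat.eq_dec (c y) (k - 1)) as [E'|E']; [|lia].
      exfalso. assert (a = y) by (apply H3; simpl; auto). subst; contradiction. }
    assert (GAr : (sumZ L (fun x => term (c x)) <= sumZ L (fun x => term (Nat.max (l x) k)))%Z).
    { apply GA; [lia| |auto]. intros; apply H1; simpl; auto. }
    specialize (H1 a (or_introl eq_refl)).
    assert (Hlt : Nat.ltb (l a) k = true) by (apply Nat.ltb_lt; lia).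
    rewrite Hlt, orb_true_l, Z.mul_1_l, E. replace (Nat.max (l a) k) with k by lia. lia.
  - assert (IH' := IH HN' ltac:(intros; apply H1; simpl; auto) ltac:(intros; apply H2; simpl; auto)
                    ltac:(intros; apply H3; simpl; auto)).
    assert (term (c a) <= term (Nat.max (l a) k))%Z.
    { apply term_anti; [lia|]. specialize (H1 a (or_introl eq_refl)). specialize (H2 a (or_introl eq_refl)). lia. }
    destruct (Nat.ltb (l a) k); [rewrite orb_true_l|rewrite orb_false_l];
    destruct (existsb (fun x => Nat.ltb (l x) k) L); rewrite ?Z.mul_1_l, ?Z.mul_0_l in *; lia.
Qed.

Inductive chk := CP (x : V) | CL (a b : V).
Definition s0 : V := (0,0)%Z.
Definition isT (o : option bool) := match o with Some true => true | _ => false end.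
Definition decided (acc : grid) p := match get acc p with Some _ => true | None => false end.
Definition valb (acc : grid) p := match get acc p with Some b => b | None => false end.
Definition lc (acc : grid) (x : V) : nat := cntl (fun p => isT (get acc p)) (nbhd x).
Definition flag (acc : grid) L k : Z := if existsb (fun x => Nat.ltb (lc acc x) k) L then 1%Z else 0%Z.

Section Checker.
Variables (d : V) (Cm Os Om : list V).
Definition isP (p : V) : bool := peqb p s0 || peqb p d.
Definition ub2 acc : Z :=
  2 * sumZ [s0; d] (fun x => term (Nat.max (lc acc x) 2))
  + 2 * (sumZ Cm (fun x => term (Nat.max (lc acc x) 3)) + flag acc Cm 3 * 420)
  + (sumZ Os (fun x => term (Nat.max (lc acc x) 2)) + flag acc Os 2 * 1260)
  + (sumZ Om (fun x => term (Nat.max (lc acc x) 2)) + flag acc Om 2 * 1260).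
Definition value (g : V -> bool) : Z :=
  2 * sumZ [s0; d] (fun x => term (cntg g x)) + 2 * sumZ Cm (fun x => term (cntg g x))
  + sumZ Os (fun x => term (cntg g x)) + sumZ Om (fun x => term (cntg g x)).
Definition run acc (c : chk) : bool :=
  match c with
  | CP x => if isT (get acc x) then
              if isP x then true else
              if forallb (decided acc) (nbrs x) then
                existsb (fun z => isT (get acc z) && negb (isP z)) (nbrs x) else true
            else true
  | CL a b => if peqb a b then true else
      match get acc a, get acc b with
      | Some false, Some false =>
        if forallb (decided acc) (nbrs a ++ nbrs b) then
          existsb (fun z => negb (Bool.eqb (adjb a z && valb acc z) (adjb b z && valb acc z))) (nbrs a ++ nbrs b)
        else true
      | _, _ => true end
  end.
Fixpoint bb (B : Z) (cells : list V) (sched : list (list chk)) acc {struct sched} : bool :=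
  match sched with
  | [] => Z.leb (ub2 acc) B
  | ch :: chs =>
    if forallb (run acc) ch then
      if Z.leb (ub2 acc) B then true else
      match cells with
      | [] => false
      | c :: cs => bb B cs chs (setg acc c false) && bb B cs chs (setg acc c true)
      end
    else true
  end.
Definition start := setg (setg grid0 s0 true) d true.

Lemma lc_le g acc x : agree g acc -> (lc acc x <= cntg g x)%nat.
Proof.
  intros Ha. unfold lc, cntg. induction (nbhd x) as [|p l IH]; simpl; [lia|].
  destruct (get acc p) as [[|]|] eqn:E; simpl; try lia.
  rewrite (Ha p true E). simpl. lia.
Qed.

Lemma decided_get g acc p : agree g acc -> decided acc p = true -> get acc p = Some (g p).
Proof.
  intros Ha. unfold decided. destruct (get acc p) as [b|] eqn:E; [|discriminate].
  intros _. rewrite (Ha p b E); auto.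
Qed.

Lemma ub2_sound g acc :
  s0 <> d -> adjb s0 d = true ->
  NoDup Cm -> (forall x, In x Cm -> adjb x s0 = true /\ adjb x d = true) ->
  NoDup Os -> (forall x, In x Os -> adjb x s0 = true) ->
  NoDup Om -> (forall x, In x Om -> adjb x d = true) ->
  g s0 = true -> g d = true -> Hloc_g g -> agree g acc ->
  (value g <= ub2 acc)%Z.
Proof.
  intros Hne Hsd NC HC NOs HOs NOm HOm gs gd HL Ha.
  assert (Hds : adjb d s0 = true) by (rewrite adjb_sym; auto).
  assert (A1 : (sumZ [s0; d] (fun x => term (cntg g x)) <= sumZ [s0; d] (fun x => term (Nat.max (lc acc x) 2)))%Z).
  { apply GA; [lia| intros; apply lc_le; auto |].
    intros x [<-|[<-|[]]].
    - apply (cnt_ge2 g s0 s0 d); auto using self_nbhd, adj_nbhd.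
    - apply (cnt_ge2 g d s0 d); auto using self_nbhd, adj_nbhd. }
  assert (A2 := GL (cntg g) (lc acc) 3 Cm ltac:(lia) NC ltac:(intros; apply lc_le; auto)
     ltac:(intros x Hx; destruct (HC x Hx); apply (cnt_ge2 g x s0 d); auto using adj_nbhd)
     ltac:(intros x y Hx Hy; destruct (HC x Hx), (HC y Hy); apply (uniq2 g s0 d); auto)).
  assert (A3 := GL (cntg g) (lc acc) 2 Os ltac:(lia) NOs ltac:(intros; apply lc_le; auto)
     ltac:(intros x Hx; apply (cnt_ge1 g x s0); auto using adj_nbhd)
     ltac:(intros x y Hx Hy; apply (uniq1 g s0); auto)).
  assert (A4 := GL (cntg g) (lc acc) 2 Om ltac:(lia) NOm ltac:(intros; apply lc_le; auto)
     ltac:(intros x Hx; apply (cnt_ge1 g x d); auto using adj_nbhd)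
     ltac:(intros x y Hx Hy; apply (uniq1 g d); auto)).
  simpl in A2, A3, A4. unfold value, ub2, flag.
  destruct (existsb (fun x => Nat.ltb (lc acc x) 3) Cm);
  destruct (existsb (fun x => Nat.ltb (lc acc x) 2) Os);
  destruct (existsb (fun x => Nat.ltb (lc acc x) 2) Om); lia.
Qed.

Lemma isP_false x : isP x = false -> x <> s0 /\ x <> d.
Proof.
  unfold isP. rewrite orb_false_iff, !peqb_false. auto.
Qed.

Lemma isP_false' x : x <> s0 -> x <> d -> isP x = false.
Proof.
  intros; unfold isP. rewrite orb_false_iff, !peqb_false. auto.
Qed.

Lemma run_sound g acc c : agree g acc -> Hpart_g g s0 d -> Hloc_g g -> run acc c = true.
Proof.
  intros Ha HP HL. destruct c as [x|a b]; unfold run; cbv beta iota.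
  - destruct (isT (get acc x)) eqn:E1; [|auto].
    destruct (isP x) eqn:E2; [auto|].
    destruct (forallb (decided acc) (nbrs x)) eqn:E3; [|auto].
    assert (gx : g x = true).
    { destruct (get acc x) as [[|]|] eqn:E; try discriminate. apply Ha in E; auto. }
    destruct (isP_false x E2) as [n1 n2].
    destruct (HP x gx n1 n2) as [z [Az [gz [z1 z2]]]].
    apply existsb_exists. exists z. split; [apply adj_nbr; auto|].
    rewrite forallb_forall in E3.
    rewrite (decided_get g acc z Ha (E3 z (adj_nbr _ _ Az))), gz. simpl.
    rewrite isP_false'; auto.
  - destruct (peqb a b) eqn:E0; [auto|].
    destruct (get acc a) as [[|]|] eqn:Ea; auto; destruct (get acc b) as [[|]|] eqn:Eb; auto.
    destruct (forallb (decided acc) (nbrs a ++ nbrs b)) eqn:E3; [|auto].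
    destruct (existsb _ _) eqn:E4; [auto|]. exfalso.
    apply (HL a b); [apply peqb_false; auto| apply Ha; auto | apply Ha; auto|].
    intros z. destruct (in_dec Vdec z (nbrs a ++ nbrs b)) as [Hz|Hz].
    + rewrite forallb_forall in E3.
      assert (vz : valb acc z = g z).
      { unfold valb. rewrite (decided_get g acc z Ha (E3 z Hz)). auto. }
      destruct (negb (Bool.eqb (adjb a z && valb acc z) (adjb b z && valb acc z))) eqn:F.
      * exfalso. rewrite (proj2 (existsb_exists _ _) (ex_intro _ z (conj Hz F))) in E4. discriminate.
      * rewrite negb_false_iff in F. apply Bool.eqb_prop in F. rewrite vz in F. auto.
    + assert (adjb a z = false).
      { destruct (adjb a z) eqn:A; auto. exfalso. apply Hz, in_or_app. left. apply adj_nbr; auto. }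
      assert (adjb b z = false).
      { destruct (adjb b z) eqn:A; auto. exfalso. apply Hz, in_or_app. right. apply adj_nbr; auto. }
      rewrite H, H0. auto.
Qed.

Lemma bb_sound B g :
  s0 <> d -> adjb s0 d = true ->
  NoDup Cm -> (forall x, In x Cm -> adjb x s0 = true /\ adjb x d = true) ->
  NoDup Os -> (forall x, In x Os -> adjb x s0 = true) ->
  NoDup Om -> (forall x, In x Om -> adjb x d = true) ->
  g s0 = true -> g d = true -> Hpart_g g s0 d -> Hloc_g g ->
  forall sched cells acc, agree g acc -> bb B cells sched acc = true -> (value g <= B)%Z.
Proof.
  intros H1 H2 H3 H4 H5 H6 H7 H8 gs gd HP HL sched.
  assert (U : forall acc, agree g acc -> (value g <= ub2 acc)%Z) by (intros; apply ub2_sound; auto).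
  induction sched as [|ch chs IH]; intros cells acc Ha Hb; simpl in Hb.
  - apply Z.leb_le in Hb. specialize (U acc Ha). lia.
  - assert (F : forallb (run acc) ch = true).
    { apply forallb_forall. intros; apply (run_sound g); auto. }
    rewrite F in Hb.
    destruct (Z.leb (ub2 acc) B) eqn:E.
    + apply Z.leb_le in E. specialize (U acc Ha). lia.
    + destruct cells as [|c cs]; [discriminate|]. apply andb_true_iff in Hb. destruct Hb as [Hb1 Hb2].
      destruct (g c) eqn:G.
      * apply (IH cs (setg acc c true)); auto. rewrite <- G. apply agree_set; auto.
      * apply (IH cs (setg acc c false)); auto. rewrite <- G. apply agree_set; auto.
Qed.

Lemma agree_start g : g s0 = true -> g d = true -> agree g start.
Proof.
  intros gs gd. unfold start.
  assert (E: setg (setg grid0 s0 true) d true = setg (setg grid0 s0 (g s0)) d (g d)) by (rewrite gs, gd; auto).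
  rewrite E. apply agree_set, agree_set, agree_grid0.
Qed.
End Checker.

Fixpoint nodupb (l : list V) : bool :=
  match l with [] => true | x :: t => negb (existsb (peqb x) t) && nodupb t end.

Lemma nodupb_NoDup l : nodupb l = true -> NoDup l.
Proof.
  induction l as [|x t IH]; simpl; intros H; constructor.
  - apply andb_true_iff in H. destruct H as [H _]. intros Hin.
    rewrite negb_true_iff in H. assert (existsb (peqb x) t = true).
    { apply existsb_exists. exists x. split; auto. apply peqb_refl. } congruence.
  - apply IH. apply andb_true_iff in H; tauto.
Qed.

Definition dataok (d : V) (Cm Os Om : list V) : bool :=
  negb (peqb s0 d) && adjb s0 d && nodupb Cm && forallb (fun x => adjb x s0 && adjb x d) Cm
  && nodupb Os && forallb (fun x => adjb x s0) Os && nodupb Om && forallb (fun x => adjb x d) Om.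

Lemma local_from_bb d Cm Os Om B cells sched g :
  dataok d Cm Os Om = true -> bb d Cm Os Om B cells sched (start d) = true ->
  g s0 = true -> g d = true -> Hpart_g g s0 d -> Hloc_g g -> (value d Cm Os Om g <= B)%Z.
Proof.
  intros Hd Hb gs gd HP HL. unfold dataok in Hd. repeat rewrite andb_true_iff in Hd.
  destruct Hd as [[[[[[[A1 A2] A3] A4] A5] A6] A7] A8].
  rewrite forallb_forall in A4, A6, A8.
  eapply (bb_sound d Cm Os Om B g); eauto using nodupb_NoDup, agree_start.
  - rewrite negb_true_iff, peqb_false in A1; auto.
  - intros x Hx; specialize (A4 x Hx); apply andb_true_iff in A4; auto.
Qed.
Definition cells_o1 : list V := [(0,-1);(0,1);(1,-1);(1,1);(-1,0);(2,0);(-1,-1);(-1,1);(2,-1);(2,1);(0,-2);(0,2);(1,-2);(1,2);(-2,0);(-1,-2);(-1,2);(2,-2);(2,2);(3,0);(-2,-1);(-2,1);(3,-1);(3,1);(-2,-2);(-2,2);(3,-2);(3,2)]%Z.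
Definition sched_o1 : list (list chk) := [[];[];[];[];[];[];[];[];[];[];[];[];[];[];[];[];[CP (0,-1)];[CP (0,1);CL (0,-1) (0,1)];[CP (1,-1);CL (0,-1) (1,-1);CL (0,1) (1,-1)];[CP (1,1);CL (0,-1) (1,1);CL (0,1) (1,1);CL (1,-1) (1,1)];[];[];[CP (-1,0);CL (-1,0) (0,-1);CL (-1,0) (0,1);CL (-1,0) (1,-1);CL (-1,0) (1,1)];[];[CP (2,0);CL (-1,0) (2,0);CL (0,-1) (2,0);CL (0,1) (2,0);CL (1,-1) (2,0);CL (1,1) (2,0)];[CP (-1,-1);CL (-1,-1) (-1,0);CL (-1,-1) (0,-1);CL (-1,-1) (0,1);CL (-1,-1) (1,-1);CL (-1,-1) (1,1);CL (-1,-1) (2,0)];[CP (-1,1);CL (-1,-1) (-1,1);CL (-1,0) (-1,1);CL (-1,1) (0,-1);CL (-1,1) (0,1);CL (-1,1) (1,-1);CL (-1,1) (1,1);CL (-1,1) (2,0)];[CP (2,-1);CL (-1,-1) (2,-1);CL (-1,0) (2,-1);CL (-1,1) (2,-1);CL (0,-1) (2,-1);CL (0,1) (2,-1);CL (1,-1) (2,-1);CL (1,1) (2,-1);CL (2,-1) (2,0)];[CP (2,1);CL (-1,-1) (2,1);CL (-1,0) (2,1);CL (-1,1) (2,1);CL (0,-1) (2,1);CL (0,1) (2,1);CL (1,-1) (2,1);CL (1,1) (2,1);CL (2,-1) (2,1);CL (2,0) (2,1)]]%Z.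
Definition Cm_o1 : list V := [(0,-1);(0,1);(1,-1);(1,1)]%Z.
Definition Os_o1 : list V := [(-1,-1);(-1,0);(-1,1)]%Z.
Definition Om_o1 : list V := [(2,-1);(2,0);(2,1)]%Z.
Definition cells_o2 : list V := [(-1,0);(-1,1);(1,0);(1,1);(0,-1);(0,2);(-1,-1);(-1,2);(1,-1);(1,2);(-2,0);(-2,1);(2,0);(2,1);(-2,-1);(-2,2);(0,-2);(0,3);(2,-1);(2,2);(-1,-2);(-1,3);(1,-2);(1,3);(-2,-2);(-2,3);(2,-2);(2,3)]%Z.
Definition sched_o2 : list (list chk) := [[];[];[];[];[];[];[];[];[];[];[];[];[];[];[];[CP (-1,0)];[CP (-1,1);CL (-1,0) (-1,1)];[];[];[CP (1,0);CL (-1,0) (1,0);CL (-1,1) (1,0)];[CP (1,1);CL (-1,0) (1,1);CL (-1,1) (1,1);CL (1,0) (1,1)];[];[];[CP (0,-1);CL (-1,0) (0,-1);CL (-1,1) (0,-1);CL (0,-1) (1,0);CL (0,-1) (1,1)];[CP (0,2);CL (-1,0) (0,2);CL (-1,1) (0,2);CL (0,-1) (0,2);CL (0,2) (1,0);CL (0,2) (1,1)];[CP (-1,-1);CL (-1,-1) (-1,0);CL (-1,-1) (-1,1);CL (-1,-1) (0,-1);CL (-1,-1) (0,2);CL (-1,-1) (1,0);CL (-1,-1) (1,1)];[CP (-1,2);CL (-1,-1) (-1,2);CL (-1,0) (-1,2);CL (-1,1) (-1,2);CL (-1,2) (0,-1);CL (-1,2) (0,2);CL (-1,2) (1,0);CL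 (-1,2) (1,1)];[CP (1,-1);CL (-1,-1) (1,-1);CL (-1,0) (1,-1);CL (-1,1) (1,-1);CL (-1,2) (1,-1);CL (0,-1) (1,-1);CL (0,2) (1,-1);CL (1,-1) (1,0);CL (1,-1) (1,1)];[CP (1,2);CL (-1,-1) (1,2);CL (-1,0) (1,2);CL (-1,1) (1,2);CL (-1,2) (1,2);CL (0,-1) (1,2);CL (0,2) (1,2);CL (1,-1) (1,2);CL (1,0) (1,2);CL (1,1) (1,2)]]%Z.
Definition Cm_o2 : list V := [(-1,0);(-1,1);(1,0);(1,1)]%Z.
Definition Os_o2 : list V := [(-1,-1);(0,-1);(1,-1)]%Z.
Definition Om_o2 : list V := [(-1,2);(0,2);(1,2)]%Z.
Definition cells_d1 : list V := [(0,1);(1,0);(-1,0);(-1,1);(0,-1);(0,2);(1,-1);(1,2);(2,0);(2,1);(-1,-1);(-1,2);(2,-1);(2,2);(-2,0);(-2,1);(0,-2);(0,3);(1,-2);(1,3);(3,0);(3,1);(-2,-1);(-2,2);(-1,-2);(-1,3);(2,-2);(2,3);(3,-1);(3,2);(-2,-2);(3,3)]%Z.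
Definition sched_d1 : list (list chk) := [[];[];[];[];[];[];[];[];[];[];[];[];[CP (0,1)];[CP (1,0);CL (0,1) (1,0)];[];[];[];[];[];[];[];[];[];[CP (-1,0);CL (-1,0) (0,1);CL (-1,0) (1,0)];[CP (-1,1);CL (-1,0) (-1,1);CL (-1,1) (0,1);CL (-1,1) (1,0)];[CP (0,-1);CL (-1,0) (0,-1);CL (-1,1) (0,-1);CL (0,-1) (0,1);CL (0,-1) (1,0)];[CP (0,2);CL (-1,0) (0,2);CL (-1,1) (0,2);CL (0,-1) (0,2);CL (0,1) (0,2);CL (0,2) (1,0)];[CP (1,-1);CL (-1,0) (1,-1);CL (-1,1) (1,-1);CL (0,-1) (1,-1);CL (0,1) (1,-1);CL (0,2) (1,-1);CL (1,-1) (1,0)];[CP (1,2);CL (-1,0) (1,2);CL (-1,1) (1,2);CL (0,-1) (1,2);CL (0,1) (1,2);CL (0,2) (1,2);CL (1,-1) (1,2);CL (1,0) (1,2)];[CP (2,0);CL (-1,0) (2,0);CL (-1,1) (2,0);CL (0,-1) (2,0);CL (0,1) (2,0);CL (0,2) (2,0);CL (1,-1) (2,0);CL (1,0) (2,0);CL (1,2) (2,0)];[CP (2,1);CL (-1,0) (2,1);CL (-1,1) (2,1);CL (0,-1) (2,1);CL (0,1) (2,1);CL (0,2) (2,1);CL (1,-1) (2,1);CL (1,0) (2,1);CL (1,2) (2,1);CL (2,0) (2,1)];[CP (-1,-1);CL (-1,-1) (-1,0);CL (-1,-1) (-1,1);CL (-1,-1) (0,-1);CL (-1,-1) (0,1);CL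 (-1,-1) (0,2);CL (-1,-1) (1,-1);CL (-1,-1) (1,0);CL (-1,-1) (1,2);CL (-1,-1) (2,0);CL (-1,-1) (2,1)];[CP (2,2);CL (-1,-1) (2,2);CL (-1,0) (2,2);CL (-1,1) (2,2);CL (0,-1) (2,2);CL (0,1) (2,2);CL (0,2) (2,2);CL (1,-1) (2,2);CL (1,0) (2,2);CL (1,2) (2,2);CL (2,0) (2,2);CL (2,1) (2,2)]]%Z.
Definition Cm_d1 : list V := [(0,1);(1,0)]%Z.
Definition Os_d1 : list V := [(-1,-1);(-1,0);(-1,1);(0,-1);(1,-1)]%Z.
Definition Om_d1 : list V := [(0,2);(1,2);(2,0);(2,1);(2,2)]%Z.
Definition cells_d2 : list V := [(0,-1);(1,0);(-1,-1);(-1,0);(0,-2);(0,1);(1,-2);(1,1);(2,-1);(2,0);(-1,-2);(-1,1);(2,-2);(2,1);(-2,-1);(-2,0);(0,-3);(0,2);(1,-3);(1,2);(3,-1);(3,0);(-2,-2);(-2,1);(-1,-3);(-1,2);(2,-3);(2,2);(3,-2);(3,1);(-2,2);(3,-3)]%Z.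
Definition sched_d2 : list (list chk) := [[];[];[];[];[];[];[];[];[];[];[];[CP (0,-1)];[];[];[CP (1,0);CL (0,-1) (1,0)];[];[];[];[];[];[];[];[];[CP (-1,-1);CL (-1,-1) (0,-1);CL (-1,-1) (1,0)];[CP (-1,0);CL (-1,-1) (-1,0);CL (-1,0) (0,-1);CL (-1,0) (1,0)];[CP (0,-2);CL (-1,-1) (0,-2);CL (-1,0) (0,-2);CL (0,-2) (0,-1);CL (0,-2) (1,0)];[CP (0,1);CL (-1,-1) (0,1);CL (-1,0) (0,1);CL (0,-2) (0,1);CL (0,-1) (0,1);CL (0,1) (1,0)];[CP (1,-2);CL (-1,-1) (1,-2);CL (-1,0) (1,-2);CL (0,-2) (1,-2);CL (0,-1) (1,-2);CL (0,1) (1,-2);CL (1,-2) (1,0)];[CP (1,1);CL (-1,-1) (1,1);CL (-1,0) (1,1);CL (0,-2) (1,1);CL (0,-1) (1,1);CL (0,1) (1,1);CL (1,-2) (1,1);CL (1,0) (1,1)];[CP (2,-1);CL (-1,-1) (2,-1);CL (-1,0) (2,-1);CL (0,-2) (2,-1);CL (0,-1) (2,-1);CL (0,1) (2,-1);CL (1,-2) (2,-1);CL (1,0) (2,-1);CL (1,1) (2,-1)];[CP (2,0);CL (-1,-1) (2,0);CL (-1,0) (2,0);CL (0,-2) (2,0);CL (0,-1) (2,0);CL (0,1) (2,0);CL (1,-2) (2,0);CL (1,0) (2,0);CL (1,1) (2,0);CL (2,-1) (2,0)];[CP (-1,1);CL (-1,-1) (-1,1);CL (-1,0) (-1,1);CL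 (-1,1) (0,-2);CL (-1,1) (0,-1);CL (-1,1) (0,1);CL (-1,1) (1,-2);CL (-1,1) (1,0);CL (-1,1) (1,1);CL (-1,1) (2,-1);CL (-1,1) (2,0)];[CP (2,-2);CL (-1,-1) (2,-2);CL (-1,0) (2,-2);CL (-1,1) (2,-2);CL (0,-2) (2,-2);CL (0,-1) (2,-2);CL (0,1) (2,-2);CL (1,-2) (2,-2);CL (1,0) (2,-2);CL (1,1) (2,-2);CL (2,-2) (2,-1);CL (2,-2) (2,0)]]%Z.
Definition Cm_d2 : list V := [(0,-1);(1,0)]%Z.
Definition Os_d2 : list V := [(-1,-1);(-1,0);(-1,1);(0,1);(1,1)]%Z.
Definition Om_d2 : list V := [(0,-2);(1,-2);(2,-2);(2,-1);(2,0)]%Z.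
Lemma ok_o1 : dataok (1,0)%Z Cm_o1 Os_o1 Om_o1 = true. Proof. vm_compute. reflexivity. Qed.
Lemma ok_o2 : dataok (0,1)%Z Cm_o2 Os_o2 Om_o2 = true. Proof. vm_compute. reflexivity. Qed.
Lemma ok_d1 : dataok (1,1)%Z Cm_d1 Os_d1 Om_d1 = true. Proof. vm_compute. reflexivity. Qed.
Lemma ok_d2 : dataok (1,-1)%Z Cm_d2 Os_d2 Om_d2 = true. Proof. vm_compute. reflexivity. Qed.
Lemma bb_o1 : bb (1,0)%Z Cm_o1 Os_o1 Om_o1 22680%Z cells_o1 sched_o1 (start (1,0)%Z) = true.
Proof. vm_compute. reflexivity. Qed.
Lemma bb_o2 : bb (0,1)%Z Cm_o2 Os_o2 Om_o2 22680%Z cells_o2 sched_o2 (start (0,1)%Z) = true.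
Proof. vm_compute. reflexivity. Qed.
Lemma bb_d1 : bb (1,1)%Z Cm_d1 Os_d1 Om_d1 23520%Z cells_d1 sched_d1 (start (1,1)%Z) = true.
Proof. vm_compute. reflexivity. Qed.
Lemma bb_d2 : bb (1,-1)%Z Cm_d2 Os_d2 Om_d2 23520%Z cells_d2 sched_d2 (start (1,-1)%Z) = true.
Proof. vm_compute. reflexivity. Qed.

Open Scope R_scope.

Definition gS (S : V -> Prop) (p : V) : bool := if excluded_middle_informative (S p) then true else false.
Lemma gS_true (S : V -> Prop) p : gS S p = true <-> S p.
Proof. unfold gS. destruct (excluded_middle_informative (S p)); split; intros; auto; try discriminate; contradiction. Qed.
Lemma gS_false (S : V -> Prop) p : gS S p = false <-> ~ S p.
Proof. unfold gS. destruct (excluded_middle_informative (S p)); split; intros; auto; try discriminate; contradiction. Qed.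
Lemma ind_gS (S : V -> Prop) p : ind (S p) = bit (gS S p).
Proof. unfold ind, gS, bit. destruct (excluded_middle_informative (S p)); auto. Qed.

Definition sumR {A} (l : list A) (f : A -> R) : R := fold_right (fun x acc => f x + acc) 0 l.
Definition cR (S : V -> Prop) x : R := INR (cntg (gS S) x).
Definition shR (S : V -> Prop) v : R := sumR (nbhd v) (fun x => / cR S x).

Lemma sumR_map {A B} (h : A -> B) l f : sumR (map h l) f = sumR l (fun x => f (h x)).
Proof. induction l; simpl; auto. rewrite IHl; auto. Qed.
Lemma sumR_ext {A} l (f g : A -> R) : (forall x, In x l -> f x = g x) -> sumR l f = sumR l g.
Proof. induction l; simpl; intros H; auto. rewrite H, IHl; auto. Qed.
Lemma sumZ_ext l (f g : V -> Z) : (forall x, In x l -> f x = g x) -> sumZ l f = sumZ l g.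
Proof. induction l; simpl; intros H; auto. rewrite H, IHl; auto. Qed.

Lemma inv_term c : (c <= 9)%nat -> / INR c = IZR (term c) / 2520.
Proof.
  intros H.
  assert (Hc : c = 0%nat \/ c = 1%nat \/ c = 2%nat \/ c = 3%nat \/ c = 4%nat \/ c = 5%nat \/ c = 6%nat \/ c = 7%nat \/ c = 8%nat \/ c = 9%nat) by lia.
  destruct Hc as [->|[->|[->|[->|[->|[->|[->|[->|[->| ->]]]]]]]]]; unfold term; simpl;
  try rewrite Rinv_0; field.
Qed.

Lemma sumR_term (S : V -> Prop) l (h : V -> V) :
  sumR l (fun x => / INR (cntg (gS S) (h x))) = IZR (sumZ l (fun x => term (cntg (gS S) (h x)))) / 2520.
Proof.
  induction l as [|a l IH]; simpl. { field. }
  rewrite IH, plus_IZR, inv_term by apply cntl_le9. field.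
Qed.

Lemma vadd_assoc a b c : vadd (vadd a b) c = vadd a (vadd b c).
Proof. destruct a, b, c; unfold vadd; simpl; f_equal; ring. Qed.

Definition vsub (x v : V) : V := (fst x - fst v, snd x - snd v)%Z.
Lemma vadd_vsub v x : vadd v (vsub x v) = x.
Proof. destruct v, x; unfold vadd, vsub; simpl; f_equal; ring. Qed.

Lemma adj_transl v a b : adj (vadd v a) (vadd v b) <-> adj a b.
Proof.
  destruct v as [v1 v2], a as [a1 a2], b as [b1 b2]; unfold adj, vadd; simpl.
  replace (v1 + a1 - (v1 + b1))%Z with (a1 - b1)%Z by ring.
  replace (v2 + a2 - (v2 + b2))%Z with (a2 - b2)%Z by ring.
  split; intros [H1 H2]; split; auto; intros E; apply H1; inversion E; f_equal; lia.
Qed.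

Lemma adjb_transl v a b : adjb (vadd v a) (vadd v b) = adjb a b.
Proof.
  destruct (adjb a b) eqn:E.
  - apply adjb_adj, adj_transl, adjb_adj; auto.
  - destruct (adjb (vadd v a) (vadd v b)) eqn:E'; auto.
    apply adjb_adj, adj_transl, adjb_adj in E'. congruence.
Qed.

Lemma cntg_transl (S : V -> Prop) v x : cntg (fun p => gS S (vadd v p)) x = cntg (gS S) (vadd v x).
Proof.
  unfold cntg, cntl, nbhd. induction D9 as [|e l IH]; simpl; auto.
  rewrite IH, vadd_assoc. auto.
Qed.

Lemma partner_unique (S : V -> Prop) (M : V -> V -> Prop) a b c : has_perfect_matching S M -> M a b -> M a c -> b = c.
Proof.
  intros [Hsym [Hin Hex]] H1 H2. destruct (Hin a b H1) as [Sa _].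
  destruct (Hex a Sa) as [w [_ Hu]]. rewrite (Hu b H1), (Hu c H2). auto.
Qed.

Lemma local_dir (S : V -> Prop) (M : V -> V -> Prop) v d Cm Os Om B cells sched :
  dataok d Cm Os Om = true -> bb d Cm Os Om B cells sched (start d) = true ->
  (forall F : V -> Z, (sumZ D9 F + sumZ (map (vadd d) D9) F =
      2 * sumZ [s0; d] F + 2 * sumZ Cm F + sumZ Os F + sumZ Om F)%Z) ->
  LPDS S -> has_perfect_matching S M -> M v (vadd v d) ->
  shR S v + shR S (vadd v d) <= IZR B / 2520.
Proof.
  intros Hok Hbb Hreg HL HM Hvw.
  set (g := fun p => gS S (vadd v p)).
  assert (Hv0 : vadd v s0 = v) by (destruct v; unfold vadd, s0; simpl; f_equal; ring).
  destruct HM as [Hsym [Hin Hex]] eqn:HMe.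
  destruct (Hin _ _ Hvw) as [Sv [Sw Avw]].
  assert (Hval : (value d Cm Os Om g <= B)%Z).
  { apply (local_from_bb d Cm Os Om B cells sched g Hok Hbb).
    - unfold g. rewrite Hv0. apply gS_true; auto.
    - unfold g. apply gS_true; auto.
    - intros x gx n1 n2. unfold g in gx. apply gS_true in gx.
      destruct (Hex _ gx) as [y [Mxy _]].
      destruct (Hin _ _ Mxy) as [_ [Sy Axy]].
      exists (vsub y v). unfold g. rewrite vadd_vsub. repeat split.
      + rewrite <- (adjb_transl v), vadd_vsub. apply adjb_adj; auto.
      + apply gS_true; auto.
      + intros E. assert (y = v) by (rewrite <- (vadd_vsub v y), E; auto). subst y.
        apply n2. assert (vadd v x = vadd v d).
        { apply (partner_unique S M v); auto. }
        apply vadd_inj in H; auto.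
      + intros E. assert (y = vadd v d) by (rewrite <- (vadd_vsub v y), E; auto). subst y.
        apply n1. assert (Mwv : M (vadd v d) v) by (apply Hsym; auto).
        assert (vadd v x = v) by (apply (partner_unique S M (vadd v d)); auto).
        apply (vadd_inj v). rewrite Hv0. auto.
    - intros a b nab ga gb Heq. unfold g in ga, gb. apply gS_false in ga, gb.
      destruct HL as [_ [_ HL3]]. apply (HL3 (vadd v a) (vadd v b)); auto.
      + intros E; apply vadd_inj in E; auto.
      + intros x. specialize (Heq (vsub x v)). unfold g in Heq. rewrite vadd_vsub in Heq.
        rewrite <- (adjb_transl v a), <- (adjb_transl v b), vadd_vsub in Heq.
        rewrite <- !adjb_adj, <- !gS_true. rewrite <- !andb_true_iff, Heq. tauto. }
  assert (Hvalue : value d Cm Os Om g =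
     (sumZ D9 (fun x => term (cntg (gS S) (vadd v x))) +
      sumZ (map (vadd d) D9) (fun x => term (cntg (gS S) (vadd v x))))%Z).
  { rewrite Hreg. unfold value.
    assert (E : forall l, sumZ l (fun x => term (cntg g x)) = sumZ l (fun x => term (cntg (gS S) (vadd v x)))).
    { intros l; apply sumZ_ext; intros; unfold g; rewrite cntg_transl; auto. }
    rewrite !E. ring. }
  unfold shR, cR, nbhd at 1 2. rewrite !sumR_map.
  assert (E2 : sumR D9 (fun x => / INR (cntg (gS S) (vadd (vadd v d) x))) =
               sumR (map (vadd d) D9) (fun x => / INR (cntg (gS S) (vadd v x)))).
  { rewrite sumR_map. apply sumR_ext. intros; rewrite vadd_assoc; auto. }
  rewrite E2, !sumR_term.
  apply IZR_le in Hval. rewrite Hvalue, plus_IZR in Hval. lra.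
Qed.

Lemma regroup_o1 (F : V -> Z) : (sumZ D9 F + sumZ (map (vadd (1,0)%Z) D9) F =
      2 * sumZ [s0; (1,0)%Z] F + 2 * sumZ Cm_o1 F + sumZ Os_o1 F + sumZ Om_o1 F)%Z.
Proof. unfold s0, Cm_o1, Os_o1, Om_o1, D9, vadd. cbn [map fst snd Z.add Z.pos_sub Pos.add Z.double Z.succ_double Z.pred_double]. unfold sumZ; cbn [fold_right]. ring. Qed.
Lemma regroup_o2 (F : V -> Z) : (sumZ D9 F + sumZ (map (vadd (0,1)%Z) D9) F =
      2 * sumZ [s0; (0,1)%Z] F + 2 * sumZ Cm_o2 F + sumZ Os_o2 F + sumZ Om_o2 F)%Z.
Proof. unfold s0, Cm_o2, Os_o2, Om_o2, D9, vadd. cbn [map fst snd Z.add Z.pos_sub Pos.add Z.double Z.succ_double Z.pred_double]. unfold sumZ; cbn [fold_right]. ring. Qed.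
Lemma regroup_d1 (F : V -> Z) : (sumZ D9 F + sumZ (map (vadd (1,1)%Z) D9) F =
      2 * sumZ [s0; (1,1)%Z] F + 2 * sumZ Cm_d1 F + sumZ Os_d1 F + sumZ Om_d1 F)%Z.
Proof. unfold s0, Cm_d1, Os_d1, Om_d1, D9, vadd. cbn [map fst snd Z.add Z.pos_sub Pos.add Z.double Z.succ_double Z.pred_double]. unfold sumZ; cbn [fold_right]. ring. Qed.
Lemma regroup_d2 (F : V -> Z) : (sumZ D9 F + sumZ (map (vadd (1,-1)%Z) D9) F =
      2 * sumZ [s0; (1,-1)%Z] F + 2 * sumZ Cm_d2 F + sumZ Os_d2 F + sumZ Om_d2 F)%Z.
Proof. unfold s0, Cm_d2, Os_d2, Om_d2, D9, vadd. cbn [map fst snd Z.add Z.pos_sub Pos.add Z.double Z.succ_double Z.pred_double]. unfold sumZ; cbn [fold_right]. ring. Qed.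

Lemma ind_iff (P Q : Prop) : (P <-> Q) -> Defs.ind P = Defs.ind Q.
Proof.
  intros H. unfold Defs.ind.
  destruct (excluded_middle_informative P), (excluded_middle_informative Q); tauto.
Qed.

Lemma ind_bool (b : bool) : Defs.ind (b = true) = bit b.
Proof. unfold Defs.ind, bit. destruct (excluded_middle_informative (b = true)), b; auto; congruence. Qed.

Lemma count_box_ext c r (P Q : V -> Prop) : (forall p, P p <-> Q p) -> count_box c r P = count_box c r Q.
Proof.
  intros H. unfold count_box. f_equal. apply map_ext. intros i. f_equal. apply map_ext. intros j.
  apply ind_iff. apply H.
Qed.

Lemma count_box_transl c r (P : V -> Prop) : count_box c r P = count_box (0,0)%Z r (fun p => P (vadd c p)).
Proof.
  unfold count_box. f_equal. apply map_ext. intros i. f_equal. apply map_ext. intros j.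
  apply ind_iff. match goal with |- P ?a <-> P ?b => replace b with a; [tauto|] end.
  unfold vadd; simpl; f_equal; ring.
Qed.

Definition count_box_b (c : V) (r : nat) (f : V -> bool) : nat :=
  fold_right Nat.add 0%nat
    (map (fun i =>
       fold_right Nat.add 0%nat
         (map (fun j => bit (f (fst c - Z.of_nat r + Z.of_nat i, snd c - Z.of_nat r + Z.of_nat j)%Z))
            (seq 0 (2 * r + 1))))
       (seq 0 (2 * r + 1))).

Lemma count_box_bool c r f : count_box c r (fun p => f p = true) = count_box_b c r f.
Proof.
  unfold count_box, count_box_b. f_equal. apply map_ext. intros i. f_equal. apply map_ext. intros j.
  apply ind_bool.
Qed.

Lemma common_transl v e : common_nbrs v (vadd v e) =
  count_box_b (0,0)%Z 1 (fun p => adjb (0,0)%Z p && adjb e p).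
Proof.
  unfold common_nbrs. rewrite count_box_transl, <- count_box_bool. apply count_box_ext.
  intros p. rewrite andb_true_iff, !adjb_adj.
  assert (E : v = vadd v (0,0)%Z) by (destruct v; unfold vadd; simpl; f_equal; ring).
  rewrite E at 1. rewrite !adj_transl. tauto.
Qed.

Lemma dir_bound (S : V -> Prop) (M : V -> V -> Prop) v d Cm Os Om B cells sched :
  dataok d Cm Os Om = true -> bb d Cm Os Om B cells sched (start d) = true ->
  (forall F : V -> Z, (sumZ D9 F + sumZ (map (vadd d) D9) F =
      2 * sumZ [s0; d] F + 2 * sumZ Cm F + sumZ Os F + sumZ Om F)%Z) ->
  LPDS S -> has_perfect_matching S M ->
  forall e, (e = d \/ vadd e d = (0,0)%Z) -> M v (vadd v e) ->
  shR S v + shR S (vadd v e) <= IZR B / 2520.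
Proof.
  intros Hok Hbb Hreg HL HM e [->|Hed] Hvw.
  - eapply local_dir; eauto.
  - assert (Ev : vadd (vadd v e) d = v).
    { rewrite vadd_assoc, Hed. destruct v; unfold vadd; simpl; f_equal; ring. }
    assert (HM' := HM). destruct HM' as [Hsym _].
    assert (Hwv : M (vadd v e) (vadd (vadd v e) d)) by (rewrite Ev; apply Hsym; auto).
    pose proof (local_dir S M (vadd v e) d Cm Os Om B cells sched Hok Hbb Hreg HL HM Hwv) as H.
    rewrite Ev in H. lra.
Qed.

Lemma local_all (S : V -> Prop) (M : V -> V -> Prop) v w : LPDS S -> has_perfect_matching S M -> M v w ->
  (common_nbrs v w = 2%nat /\ shR S v + shR S w <= 14/3 + 14/3) \/
  (common_nbrs v w = 4%nat /\ shR S v + shR S w <= 9/2 + 9/2).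
Proof.
  intros HL HM Hvw.
  assert (HM' := HM). destruct HM' as [Hsym [Hin _]].
  destruct (Hin _ _ Hvw) as [_ [_ Avw]].
  apply adjb_adj, adj_nbr in Avw. unfold nbrs in Avw. apply in_map_iff in Avw.
  destruct Avw as [e [<- He]].
  pose proof (dir_bound S M v _ _ _ _ _ _ _ ok_o1 bb_o1 regroup_o1 HL HM e) as B1.
  pose proof (dir_bound S M v _ _ _ _ _ _ _ ok_o2 bb_o2 regroup_o2 HL HM e) as B2.
  pose proof (dir_bound S M v _ _ _ _ _ _ _ ok_d1 bb_d1 regroup_d1 HL HM e) as B3.
  pose proof (dir_bound S M v _ _ _ _ _ _ _ ok_d2 bb_d2 regroup_d2 HL HM e) as B4.
  unfold D8 in He; simpl in He;
  destruct He as [<-|[<-|[<-|[<-|[<-|[<-|[<-|[<-|[]]]]]]]]]; rewrite common_transl.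
  - left. split; [reflexivity|]. assert (H := B3 (or_intror eq_refl) Hvw). lra.
  - right. split; [reflexivity|]. assert (H := B1 (or_intror eq_refl) Hvw). lra.
  - left. split; [reflexivity|]. assert (H := B4 (or_intror eq_refl) Hvw). lra.
  - right. split; [reflexivity|]. assert (H := B2 (or_intror eq_refl) Hvw). lra.
  - right. split; [reflexivity|]. assert (H := B2 (or_introl eq_refl) Hvw). lra.
  - left. split; [reflexivity|]. assert (H := B4 (or_introl eq_refl) Hvw). lra.
  - right. split; [reflexivity|]. assert (H := B1 (or_introl eq_refl) Hvw). lra.
  - left. split; [reflexivity|]. assert (H := B3 (or_introl eq_refl) Hvw). lra.
Qed.

Open Scope R_scope.

Lemma sumR_plus {A} l (f g : A -> R) : sumR l (fun x => f x + g x) = sumR l f + sumR l g.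
Proof. induction l; simpl; [lra|]. rewrite IHl; lra. Qed.
Lemma sumR_scal {A} l (f : A -> R) c : sumR l (fun x => c * f x) = c * sumR l f.
Proof. induction l; simpl; [lra|]. rewrite IHl; lra. Qed.
Lemma sumR_le {A} l (f g : A -> R) : (forall x, In x l -> f x <= g x) -> sumR l f <= sumR l g.
Proof. induction l; simpl; intros H; [lra|]. assert (f a <= g a) by auto. assert (sumR l f <= sumR l g) by auto. lra. Qed.
Lemma sumR_nonneg {A} l (f : A -> R) : (forall x, In x l -> 0 <= f x) -> 0 <= sumR l f.
Proof. induction l; simpl; intros H; [lra|]. assert (0 <= f a) by auto. assert (0 <= sumR l f) by auto. lra. Qed.
Lemma sumR_zero {A} l : sumR l (fun _ : A => 0) = 0.
Proof. induction l; simpl; [lra|]. rewrite IHl; lra. Qed.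
Lemma sumR_swap {A B} (l1 : list A) (l2 : list B) f :
  sumR l1 (fun x => sumR l2 (fun y => f x y)) = sumR l2 (fun y => sumR l1 (fun x => f x y)).
Proof.
  induction l1; simpl. { rewrite sumR_zero; auto. }
  rewrite IHl1, <- sumR_plus. auto.
Qed.
Lemma sumR_app {A} l1 l2 (f : A -> R) : sumR (l1 ++ l2) f = sumR l1 f + sumR l2 f.
Proof. induction l1; simpl; [lra|]. rewrite IHl1; lra. Qed.
Lemma sumR_flat_map {A B} (h : A -> list B) l f : sumR (flat_map h l) f = sumR l (fun x => sumR (h x) f).
Proof. induction l; simpl; auto. rewrite sumR_app, IHl; auto. Qed.
Lemma sumR_const1 {A} (l : list A) : sumR l (fun _ => 1) = INR (length l).
Proof. induction l; simpl; auto. rewrite IHl. destruct (length l); simpl; lra. Qed.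

Definition dlt (y v : V) : R := if Vdec y v then 1 else 0.
Definition din (y : V) (l : list V) : R := if in_dec Vdec y l then 1 else 0.

Lemma din_cons_eq y l : din y (y :: l) = 1.
Proof. unfold din. destruct (in_dec Vdec y (y :: l)) as [|n]; auto. exfalso; apply n; left; auto. Qed.
Lemma din_cons_neq y a l : y <> a -> din y (a :: l) = din y l.
Proof.
  intros H. unfold din. destruct (in_dec Vdec y (a :: l)) as [i|n], (in_dec Vdec y l) as [i'|n']; auto.
  - destruct i; [congruence|contradiction].
  - exfalso; apply n; right; auto.
Qed.
Lemma din_notin y l : ~ In y l -> din y l = 0.
Proof. unfold din. destruct (in_dec Vdec y l); auto; contradiction. Qed.

Lemma sumR_dlt l y f : NoDup l -> sumR l (fun v => dlt y v * f v) = din y l * f y.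
Proof.
  induction l as [|a l IH]; intros H.
  - unfold din; simpl. lra.
  - inversion H; subst. cbn [sumR fold_right]. fold (sumR l (fun v => dlt y v * f v)).
    rewrite IH by auto. unfold dlt.
    destruct (Vdec y a) as [<-|n].
    + rewrite din_cons_eq, din_notin by auto. lra.
    + rewrite din_cons_neq by auto. lra.
Qed.

Lemma dlt_sym y v : dlt y v = dlt v y.
Proof. unfold dlt. destruct (Vdec y v), (Vdec v y); subst; auto; congruence. Qed.

Lemma sumR_sub L1 L2 (f : V -> R) : NoDup L1 -> NoDup L2 -> (forall x, 0 <= f x) ->
  sumR L1 (fun x => din x L2 * f x) <= sumR L2 f.
Proof.
  intros N1 N2 Hf.
  transitivity (sumR L1 (fun x => sumR L2 (fun z => dlt x z * f z))).
  { right. apply sumR_ext. intros. rewrite sumR_dlt; auto. }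
  rewrite sumR_swap. apply sumR_le. intros z _.
  transitivity (sumR L1 (fun x => dlt z x * f z)).
  { right. apply sumR_ext. intros; rewrite dlt_sym; auto. }
  rewrite sumR_dlt by auto. unfold din. destruct (in_dec Vdec z L1); specialize (Hf z); lra.
Qed.

Definition zs (a : Z) (r : nat) : list Z := map (fun i => a - Z.of_nat r + Z.of_nat i)%Z (seq 0 (2*r+1)).
Definition box (c : V) (r : nat) : list V := flat_map (fun x => map (fun y => (x,y)) (zs (snd c) r)) (zs (fst c) r).

Lemma in_zs a r z : In z (zs a r) <-> (a - Z.of_nat r <= z <= a + Z.of_nat r)%Z.
Proof.
  unfold zs. rewrite in_map_iff. split.
  - intros [i [<- Hi]]. apply in_seq in Hi. lia.
  - intros H. exists (Z.to_nat (z - a + Z.of_nat r)). split.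
    + rewrite Z2Nat.id by lia. lia.
    + apply in_seq. lia.
Qed.

Lemma zs_nodup a r : NoDup (zs a r).
Proof.
  unfold zs. apply NoDup_map_NoDup_ForallPairs; [|apply seq_NoDup].
  intros x y _ _ H. lia.
Qed.

Lemma in_box c r p : In p (box c r) <->
  ((fst c - Z.of_nat r <= fst p <= fst c + Z.of_nat r) /\ (snd c - Z.of_nat r <= snd p <= snd c + Z.of_nat r))%Z.
Proof.
  unfold box. rewrite in_flat_map. split.
  - intros [x [Hx Hp]]. apply in_map_iff in Hp. destruct Hp as [y [<- Hy]].
    apply in_zs in Hx, Hy. simpl. lia.
  - intros [H1 H2]. exists (fst p). split; [apply in_zs; auto|].
    apply in_map_iff. exists (snd p). split; [destruct p; auto| apply in_zs; auto].
Qed.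

Lemma box_nodup c r : NoDup (box c r).
Proof.
  unfold box. generalize (zs_nodup (fst c) r). generalize (zs_nodup (snd c) r).
  generalize (zs (snd c) r) as ys. generalize (zs (fst c) r) as xs.
  induction xs as [|x xs IH]; intros ys Hy Hx; simpl; [constructor|].
  inversion Hx; subst. apply NoDup_app.
  - apply NoDup_map_NoDup_ForallPairs; auto. intros a b _ _ H; inversion H; auto.
  - apply IH; auto.
  - intros p Hp1 Hp2. apply in_map_iff in Hp1. destruct Hp1 as [y [<- _]].
    apply in_flat_map in Hp2. destruct Hp2 as [x' [Hx' Hp]]. apply in_map_iff in Hp.
    destruct Hp as [y' [E _]]. inversion E; subst. contradiction.
Qed.

Lemma box_length c r : length (box c r) = ((2*r+1)*(2*r+1))%nat.
Proof.
  unfold box. rewrite (flat_map_constant_length (c := (2*r+1)%nat)).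
  - unfold zs. rewrite length_map, length_seq. auto.
  - intros x _. unfold zs. rewrite !length_map, length_seq. auto.
Qed.

Lemma INR_fold_sum {A} (f : A -> nat) l : INR (fold_right Nat.add 0%nat (map f l)) = sumR l (fun x => INR (f x)).
Proof. induction l; simpl; auto. rewrite plus_INR, IHl; auto. Qed.

Lemma count_box_sum c r (P : V -> Prop) : INR (count_box c r P) = sumR (box c r) (fun p => INR (Defs.ind (P p))).
Proof.
  unfold count_box, box, zs. rewrite INR_fold_sum, sumR_flat_map, sumR_map.
  apply sumR_ext. intros i _. rewrite INR_fold_sum, sumR_map, sumR_map. auto.
Qed.

Lemma dist_box k p : (Z.abs (fst p) <= Z.of_nat k)%Z -> (Z.abs (snd p) <= Z.of_nat k)%Z -> dist_le k (0,0)%Z p.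
Proof.
  revert p. induction k as [|k IH]; intros [p1 p2] H1 H2; simpl in *.
  - f_equal; lia.
  - destruct (Z_le_gt_dec (Z.abs p1) (Z.of_nat k)); destruct (Z_le_gt_dec (Z.abs p2) (Z.of_nat k)).
    + left. apply IH; simpl; auto.
    + right. set (f := fun z : Z => if Z_lt_dec 0 z then (z - 1)%Z else if Z_lt_dec z 0 then (z + 1)%Z else z).
      exists (f p1, f p2). split.
      * apply IH; simpl; unfold f; destruct (Z_lt_dec 0 p1), (Z_lt_dec p1 0), (Z_lt_dec 0 p2), (Z_lt_dec p2 0); lia.
      * unfold adj; simpl. unfold f.
        destruct (Z_lt_dec 0 p1), (Z_lt_dec p1 0), (Z_lt_dec 0 p2), (Z_lt_dec p2 0); split;
          try (intros E; inversion E; lia); nia.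
    + right. set (f := fun z : Z => if Z_lt_dec 0 z then (z - 1)%Z else if Z_lt_dec z 0 then (z + 1)%Z else z).
      exists (f p1, f p2). split.
      * apply IH; simpl; unfold f; destruct (Z_lt_dec 0 p1), (Z_lt_dec p1 0), (Z_lt_dec 0 p2), (Z_lt_dec p2 0); lia.
      * unfold adj; simpl. unfold f.
        destruct (Z_lt_dec 0 p1), (Z_lt_dec p1 0), (Z_lt_dec 0 p2), (Z_lt_dec p2 0); split;
          try (intros E; inversion E; lia); nia.
    + right. set (f := fun z : Z => if Z_lt_dec 0 z then (z - 1)%Z else if Z_lt_dec z 0 then (z + 1)%Z else z).
      exists (f p1, f p2). split.
      * apply IH; simpl; unfold f; destruct (Z_lt_dec 0 p1), (Z_lt_dec p1 0), (Z_lt_dec 0 p2), (Z_lt_dec p2 0); lia.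
      * unfold adj; simpl. unfold f.
        destruct (Z_lt_dec 0 p1), (Z_lt_dec p1 0), (Z_lt_dec 0 p2), (Z_lt_dec p2 0); split;
          try (intros E; inversion E; lia); nia.
Qed.

Lemma card_ball_box (A : V -> Prop) k :
  INR (card_in_ball A (0,0)%Z k) = sumR (box (0,0)%Z k) (fun p => INR (Defs.ind (A p))).
Proof.
  unfold card_in_ball. rewrite count_box_sum. apply sumR_ext. intros p Hp.
  apply in_box in Hp. simpl in Hp. f_equal. apply ind_iff. split; [tauto|].
  intros H; split; auto. apply dist_box; lia.
Qed.


Lemma in_nbhd x y : In y (nbhd x) <-> (Z.abs (fst y - fst x) <= 1 /\ Z.abs (snd y - snd x) <= 1)%Z.
Proof.
  split.
  - unfold nbhd, D9, vadd. simpl. destruct x; simpl.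
    intros H; repeat destruct H as [<-|H]; simpl; try lia; contradiction.
  - intros H. destruct x as [x1 x2], y as [y1 y2]; simpl in H.
    assert (A: (y1 - x1 = -1 \/ y1 - x1 = 0 \/ y1 - x1 = 1)%Z) by lia.
    assert (B: (y2 - x2 = -1 \/ y2 - x2 = 0 \/ y2 - x2 = 1)%Z) by lia.
    unfold nbhd, D9, vadd; simpl.
    destruct A as [A|[A|A]]; destruct B as [B|[B|B]];
    repeat first [ left; f_equal; lia | right ].
Qed.

Lemma nbhd_sym x y : In y (nbhd x) <-> In x (nbhd y).
Proof. rewrite !in_nbhd. lia. Qed.

Lemma INR_ind_01 (P : Prop) : INR (Defs.ind P) = if excluded_middle_informative P then 1 else 0.
Proof. unfold Defs.ind. destruct (excluded_middle_informative P); simpl; auto. Qed.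

Lemma sum_bits (g : V -> bool) l : sumR l (fun y => INR (bit (g y))) = INR (cntl g l).
Proof. induction l; simpl; auto. rewrite IHl, plus_INR. auto. Qed.

Section Global.
Variables (S : V -> Prop) (M : V -> V -> Prop).
Hypothesis HL : LPDS S.
Hypothesis HM : has_perfect_matching S M.

Let g := gS S.
Definition cnt x := INR (cntg (gS S) x).
Definition mu (y v : V) : R := INR (Defs.ind (M y v)).
Definition wgt (x v : V) : R :=
  / (2 * cnt x) * sumR (nbhd x) (fun y => INR (bit (gS S y)) * (dlt y v + mu y v)).

Lemma cnt_pos x : 1 <= cnt x.
Proof.
  unfold cnt. destruct HL as [Hd _]. destruct (Hd x) as [Sx|[y [Axy Sy]]].
  - assert (1 <= cntg (gS S) x)%nat by (apply (cnt_ge1 (gS S) x x); auto using self_nbhd; apply gS_true; auto).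
    apply le_INR in H. simpl in H. lra.
  - assert (1 <= cntg (gS S) x)%nat.
    { apply (cnt_ge1 (gS S) x y); [apply adj_nbhd, adjb_adj; auto| apply gS_true; auto]. }
    apply le_INR in H. simpl in H. lra.
Qed.

Lemma partner v : S v -> exists w, M v w /\ forall y, M y v <-> y = w.
Proof.
  intros Sv. destruct HM as [Hsym [Hin Hex]].
  destruct (Hex v Sv) as [w [Mvw Hu]]. exists w. split; auto.
  intros y. split.
  - intros Myv. apply Hu, Hsym; auto.
  - intros ->. apply Hsym; auto.
Qed.

Lemma mu_dlt y w : (forall z, M y z <-> z = w) -> forall v, mu y v = dlt w v.
Proof.
  intros H v. unfold mu, dlt. rewrite INR_ind_01.
  destruct (excluded_middle_informative (M y v)) as [m|m]; destruct (Vdec w v) as [e|e]; auto.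
  - exfalso. apply e. symmetry. apply H; auto.
  - exfalso. apply m. apply H; auto.
Qed.

Lemma wgt_sum x k : In x (box (0,0)%Z k) -> sumR (box (0,0)%Z (k+2)) (wgt x) = 1.
Proof.
  intros Hx. unfold wgt. rewrite sumR_scal, sumR_swap.
  assert (E : sumR (nbhd x) (fun y => sumR (box (0,0)%Z (k+2)) (fun v => INR (bit (gS S y)) * (dlt y v + mu y v)))
              = sumR (nbhd x) (fun y => 2 * INR (bit (gS S y)))).
  { apply sumR_ext. intros y Hy. rewrite sumR_scal, sumR_plus.
    destruct (gS S y) eqn:G; simpl; [|lra].
    apply gS_true in G.
    assert (Hyb : In y (box (0,0)%Z (k+2))).
    { apply in_box in Hx. apply in_nbhd in Hy. apply in_box. simpl in *. lia. }
    assert (E1 : sumR (box (0,0)%Z (k+2)) (dlt y) = 1).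
    { transitivity (sumR (box (0,0)%Z (k+2)) (fun v => dlt y v * 1)).
      { apply sumR_ext; intros; lra. }
      rewrite sumR_dlt by apply box_nodup. unfold din. destruct (in_dec Vdec y _); [lra|contradiction]. }
    destruct HM as [Hsym [Hin Hex]].
    destruct (Hex y G) as [z [Myz Hu]].
    assert (Hz : forall v, M y v <-> v = z) by (intros v; split; [apply Hu| intros ->; auto]).
    assert (E2 : sumR (box (0,0)%Z (k+2)) (mu y) = 1).
    { transitivity (sumR (box (0,0)%Z (k+2)) (fun v => dlt z v * 1)).
      { apply sumR_ext; intros; rewrite (mu_dlt y z Hz); lra. }
      rewrite sumR_dlt by apply box_nodup. unfold din. destruct (in_dec Vdec z _) as [|n]; [lra|].
      exfalso. apply n. destruct (Hin y z Myz) as [_ [_ Ayz]].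
      apply adjb_adj, adj_nbhd, in_nbhd in Ayz.
      apply in_box in Hx. apply in_nbhd in Hy. apply in_box. simpl in *. lia. }
    rewrite E1, E2. lra. }
  rewrite E, sumR_scal, sum_bits. fold (cntg (gS S) x). fold (cnt x).
  assert (H := cnt_pos x). field. lra.
Qed.

Lemma wgt_nonneg x v : 0 <= wgt x v.
Proof.
  unfold wgt. assert (H := cnt_pos x).
  apply Rmult_le_pos.
  - apply Rlt_le, Rinv_0_lt_compat. lra.
  - apply sumR_nonneg. intros y _. apply Rmult_le_pos.
    + destruct (gS S y); simpl; lra.
    + unfold dlt, mu. rewrite INR_ind_01. destruct (Vdec y v), (excluded_middle_informative (M y v)); lra.
Qed.

Lemma ind_01 (P : Prop) : 0 <= INR (Defs.ind P).
Proof. rewrite INR_ind_01. destruct (excluded_middle_informative P); lra. Qed.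

Lemma wgt_col v k :
  sumR (box (0,0)%Z k) (fun x => wgt x v) <=
  14/3 * INR (Defs.ind (S_of S M 2 v)) + 9/2 * INR (Defs.ind (S_of S M 4 v)).
Proof.
  destruct (classic (S v)) as [Sv|nSv].
  - destruct (partner v Sv) as [w [Mvw Hw]].
    assert (Hw' : forall y, M y v <-> y = w) by auto.
    assert (Ew : forall x, wgt x v = din v (nbhd x) * / (2 * cnt x) + din w (nbhd x) * / (2 * cnt x)).
    { intros x. unfold wgt.
      transitivity (/ (2 * cnt x) * (sumR (nbhd x) (fun y => dlt v y * INR (bit (gS S y)))
                                   + sumR (nbhd x) (fun y => dlt w y * 1))).
      { f_equal. rewrite <- sumR_plus. apply sumR_ext. intros y _.
        rewrite (dlt_sym y v).
        assert (mu y v = dlt w y).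
        { unfold mu, dlt. rewrite INR_ind_01.
          destruct (excluded_middle_informative (M y v)) as [m|m], (Vdec w y) as [e|e]; auto.
          - exfalso; apply e; symmetry; apply Hw; auto.
          - exfalso; apply m; apply Hw; auto. }
        rewrite H. unfold dlt. destruct (Vdec w y) as [<-|e].
        - assert (gS S w = true).
          { apply gS_true. destruct HM as [_ [Hin _]]. destruct (Hin v w Mvw) as [_ [Sw _]]; auto. }
          rewrite H0. simpl. lra.
        - lra. }
      rewrite !sumR_dlt by apply nbhd_nodup.
      assert (gS S v = true) by (apply gS_true; auto). rewrite H. simpl. lra. }
    rewrite (sumR_ext _ _ _ (fun x _ => Ew x)), sumR_plus.
    assert (Hnb : forall u, din u (nbhd u) = 1) by (intros; unfold din; destruct (in_dec Vdec u (nbhd u)) as [|n]; [auto|exfalso; apply n, self_nbhd]).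
    assert (Bd : forall u, sumR (box (0,0)%Z k) (fun x => din u (nbhd x) * / (2 * cnt x)) <= shR S u / 2).
    { intros u.
      transitivity (sumR (box (0,0)%Z k) (fun x => din x (nbhd u) * (/ (2 * cnt x)))).
      { right. apply sumR_ext. intros x _. f_equal. unfold din.
        destruct (in_dec Vdec u (nbhd x)) as [i|n], (in_dec Vdec x (nbhd u)) as [i'|n']; auto.
        - exfalso; apply n'; apply nbhd_sym; auto.
        - exfalso; apply n; apply nbhd_sym; auto. }
      eapply Rle_trans. { apply sumR_sub; [apply box_nodup|apply nbhd_nodup|].
        intros x. assert (H := cnt_pos x). apply Rlt_le, Rinv_0_lt_compat. lra. }
      unfold shR, cR. right. unfold Rdiv. rewrite Rmult_comm, <- sumR_scal. apply sumR_ext.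
      intros x _. fold (cnt x). assert (H := cnt_pos x). field. lra. }
    assert (B1 := Bd v). assert (B2 := Bd w).
    destruct (local_all S M v w HL HM Mvw) as [[C L]|[C L]].
    + assert (I2 : INR (Defs.ind (S_of S M 2 v)) = 1).
      { rewrite INR_ind_01. destruct (excluded_middle_informative (S_of S M 2 v)) as [|n]; auto.
        exfalso; apply n. split; auto. exists w; auto. }
      assert (I4 : INR (Defs.ind (S_of S M 4 v)) = 0).
      { rewrite INR_ind_01. destruct (excluded_middle_informative (S_of S M 4 v)) as [[_ [w' [Mw' C']]]|n]; auto.
        exfalso. assert (w' = w) by (apply (partner_unique S M v); auto). subst. congruence. }
      rewrite I2, I4. lra.
    + assert (I4 : INR (Defs.ind (S_of S M 4 v)) = 1).
      { rewrite INR_ind_01. destruct (excluded_middle_informative (S_of S M 4 v)) as [|n]; auto.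
        exfalso; apply n. split; auto. exists w; auto. }
      assert (I2 : INR (Defs.ind (S_of S M 2 v)) = 0).
      { rewrite INR_ind_01. destruct (excluded_middle_informative (S_of S M 2 v)) as [[_ [w' [Mw' C']]]|n]; auto.
        exfalso. assert (w' = w) by (apply (partner_unique S M v); auto). subst. congruence. }
      rewrite I2, I4. lra.
  - assert (E : forall x, wgt x v = 0).
    { intros x. unfold wgt. rewrite (sumR_ext _ _ (fun _ => 0)). { rewrite sumR_zero. lra. }
      intros y _. destruct (gS S y) eqn:G; simpl; [|lra].
      apply gS_true in G. unfold dlt, mu. rewrite INR_ind_01.
      destruct (Vdec y v) as [->|_]; [contradiction|].
      destruct (excluded_middle_informative (M y v)) as [m|_]; [|lra].
      destruct HM as [_ [Hin _]]. destruct (Hin y v m) as [_ [Sv _]]. contradiction. }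
    rewrite (sumR_ext _ _ (fun _ => 0)) by (intros; apply E). rewrite sumR_zero.
    assert (H1 := ind_01 (S_of S M 2 v)). assert (H2 := ind_01 (S_of S M 4 v)). lra.
Qed.

Lemma main_ineq k :
  INR (length (box (0,0)%Z k)) <=
  14/3 * sumR (box (0,0)%Z (k+2)) (fun v => INR (Defs.ind (S_of S M 2 v))) +
  9/2 * sumR (box (0,0)%Z (k+2)) (fun v => INR (Defs.ind (S_of S M 4 v))).
Proof.
  rewrite <- sumR_const1.
  rewrite (sumR_ext _ _ (fun x => sumR (box (0,0)%Z (k+2)) (wgt x))) by (intros x Hx; symmetry; apply (wgt_sum x k Hx)).
  rewrite sumR_swap, <- !sumR_scal, <- sumR_plus. apply sumR_le. intros v _. apply wgt_col.
Qed.
End Global.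

From Coquelicot Require Import Coquelicot.
Open Scope R_scope.

Definition ratio (A : V -> Prop) (k : nat) : R :=
  INR (card_in_ball A (0%Z, 0%Z) k) / INR (card_in_ball (fun _ => True) (0%Z, 0%Z) k).

Lemma card_true n : INR (card_in_ball (fun _ => True) (0%Z,0%Z) n) = (2 * INR n + 1) * (2 * INR n + 1).
Proof.
  rewrite card_ball_box.
  rewrite (sumR_ext _ _ (fun _ => 1)).
  - rewrite sumR_const1, box_length, mult_INR, plus_INR, mult_INR. simpl. lra.
  - intros x _. rewrite INR_ind_01. destruct (excluded_middle_informative True); [auto|tauto].
Qed.

Lemma ratio_bounds A n : 0 <= ratio A n <= 1.
Proof.
  unfold ratio. rewrite card_true, card_ball_box.
  assert (P : 0 < (2 * INR n + 1) * (2 * INR n + 1)) by (assert (H := pos_INR n); nra).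
  assert (H1 : 0 <= sumR (box (0,0)%Z n) (fun p => INR (Defs.ind (A p)))) by (apply sumR_nonneg; intros; apply ind_01).
  assert (H2 : sumR (box (0,0)%Z n) (fun p => INR (Defs.ind (A p))) <= (2 * INR n + 1) * (2 * INR n + 1)).
  { transitivity (sumR (box (0,0)%Z n) (fun _ => 1)).
    - apply sumR_le. intros x _. rewrite INR_ind_01. destruct (excluded_middle_informative (A x)); lra.
    - rewrite sumR_const1, box_length, mult_INR, plus_INR, mult_INR. simpl. lra. }
  split.
  - apply Rmult_le_pos; auto. apply Rlt_le, Rinv_0_lt_compat; auto.
  - apply Rmult_le_reg_r with ((2 * INR n + 1) * (2 * INR n + 1)); auto.
    unfold Rdiv. rewrite Rmult_assoc, Rinv_l by lra. lra.
Qed.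

Lemma dens_upper A eps : 0 < eps -> exists N, forall n, (N <= n)%nat -> ratio A n < density A + eps.
Proof.
  intros He. unfold density. fold (ratio A).
  unfold LimSup_seq. destruct (ex_LimSup_seq (ratio A)) as [l Hl]. simpl.
  destruct l as [l| |]; simpl in Hl.
  - destruct (Hl (mkposreal eps He)) as [_ [N HN]]. exists N. intros n Hn. apply HN; auto.
  - exfalso. destruct (Hl 2 0%nat) as [n [_ Hn]]. assert (H := ratio_bounds A n). lra.
  - exfalso. destruct (Hl 0) as [N HN]. specialize (HN N (le_n N)). assert (H := ratio_bounds A N). lra.
Qed.

Lemma key_ineq S M n : LPDS S -> has_perfect_matching S M -> (2 <= n)%nat ->
  (2 * INR n - 3) * (2 * INR n - 3) <=
  ((14/3) * ratio (S_of S M 2) n + (9/2) * ratio (S_of S M 4) n) * ((2 * INR n + 1) * (2 * INR n + 1)).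
Proof.
  intros HL HM Hn.
  assert (H := main_ineq S M HL HM (n - 2)).
  replace (n - 2 + 2)%nat with n in H by lia.
  rewrite box_length, mult_INR, plus_INR, mult_INR, minus_INR in H by lia. simpl in H.
  unfold ratio. rewrite card_true, !card_ball_box.
  assert (P : 0 < (2 * INR n + 1) * (2 * INR n + 1)) by (assert (H0 := pos_INR n); nra).
  replace ((14 / 3 * (sumR (box (0%Z, 0%Z) n) (fun p => INR (Defs.ind (S_of S M 2 p))) / ((2 * INR n + 1) * (2 * INR n + 1))) +
            9 / 2 * (sumR (box (0%Z, 0%Z) n) (fun p => INR (Defs.ind (S_of S M 4 p))) / ((2 * INR n + 1) * (2 * INR n + 1)))) *
           ((2 * INR n + 1) * (2 * INR n + 1)))
    with (14 / 3 * sumR (box (0%Z, 0%Z) n) (fun p => INR (Defs.ind (S_of S M 2 p))) +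
          9 / 2 * sumR (box (0%Z, 0%Z) n) (fun p => INR (Defs.ind (S_of S M 4 p)))) by (field; assert (H0 := pos_INR n); lra).
  lra.
Qed.

Theorem theorem1 (S : V -> Prop) (M : V -> V -> Prop) :
  LPDS S -> has_perfect_matching S M ->
  14 / 3 * density (S_of S M 2) + 9 / 2 * density (S_of S M 4) >= 1.
Proof.
  intros HL HM.
  set (la := density (S_of S M 2)). set (lb := density (S_of S M 4)).
  apply Rnot_lt_ge. intros Hlt.
  set (delta := 1 - (14/3 * la + 9/2 * lb)).
  assert (Hd : 0 < delta) by (unfold delta; lra).
  destruct (dens_upper (S_of S M 2) (delta / 20)) as [N1 HN1]; [lra|].
  destruct (dens_upper (S_of S M 4) (delta / 20)) as [N2 HN2]; [lra|].
  destruct (archimed (8 / delta)) as [Ha _].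
  assert (Hup : (0 <= up (8 / delta))%Z).
  { apply le_IZR. assert (0 < 8 / delta) by (apply Rdiv_lt_0_compat; lra). simpl. lra. }
  set (n := (N1 + N2 + Z.to_nat (up (8 / delta)) + 2)%nat).
  assert (Xn : 8 / delta < INR n).
  { assert (INR (Z.to_nat (up (8 / delta))) <= INR n) by (apply le_INR; unfold n; lia).
    rewrite INR_IZR_INZ, Z2Nat.id in H by auto. lra. }
  assert (A1 := HN1 n ltac:(unfold n; lia)). assert (A2 := HN2 n ltac:(unfold n; lia)).
  assert (K := key_ineq S M n HL HM ltac:(unfold n; lia)).
  fold la lb in A1, A2.
  set (X := INR n) in *.
  set (r1 := ratio (S_of S M 2) n) in *. set (r2 := ratio (S_of S M 4) n) in *.
  assert (HX : 0 <= X) by (unfold X; apply pos_INR).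
  set (D := (2 * X + 1) * (2 * X + 1)) in *.
  assert (HD : 0 < D) by (unfold D; nra).
  assert (T : 14/3 * r1 + 9/2 * r2 < 1 - delta + 55/120 * delta) by (unfold delta in *; lra).
  assert (T2 : (14/3 * r1 + 9/2 * r2) * D <= (1 - 65/120 * delta) * D) by (apply Rmult_le_compat_r; lra).
  assert (E : (2 * X - 3) * (2 * X - 3) = D - 8 * (2 * X + 1) + 16) by (unfold D; ring).
  assert (Hdx : 8 < delta * X).
  { apply (Rmult_lt_compat_l delta) in Xn; auto. unfold Rdiv in Xn. rewrite <- Rmult_assoc, (Rmult_comm delta 8), Rmult_assoc, Rinv_r in Xn by lra. lra. }
  assert (65/120 * delta * D <= 8 * (2 * X + 1) - 16) by lra.
  unfold D in H. nra.
Qed.
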